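(* Let $X$ and $Y$ be sets of points in a tree with $|X|=|Y|$, and let $r\in X$. Then there exists a minimum cost perfect matching of $X$ to $Y$ (cost = sum of tree distances of matched pairs) that is $r$-local, i.e., in which $r$ is matched to a point $y\in Y$ such that the path $\mathcal{P}(r,y)$ contains no point of $Y$ other than $y$.
   Context: The tree carries its path metric $d$; $\mathcal{P}(v,w)$ denotes the unique path between points $v$ and $w$. *)

(* Defs.v *)
From Stdlib Require Import ClassicalEpsilon.
From mathcomp Require Import all_boot all_order all_algebra.
Set Implicit Arguments. Unset Strict Implicit. Unset Printing Implicit Defensive.
Import Order.TTheory GRing.Theory Num.Theory.
Local Open Scope ring_scope.

Section Tree.
Variable T : finType.
Variable e : rel T.

(* p is (the tail of) a simple e-path u = u0, u1, ..., uk = v *)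
Definition upath (u : T) (p : seq T) (v : T) : bool :=
  [&& path e u p, last u p == v & uniq (u :: p)].

Definition is_tree : Prop :=
  symmetric e /\ irreflexive e /\
  (forall u v : T, exists! p : seq T, upath u p v).

Definition tpath (u v : T) : seq T :=
  epsilon (inhabits [::]) (fun p => upath u p v).

Definition Ppath (u v : T) : seq T := u :: tpath u v.

Variable R : realFieldType.
Variable w : T -> T -> R.

Definition is_edge_length : Prop :=
  (forall u v, w u v = w v u) /\ (forall u v, e u v -> 0 < w u v).

Fixpoint plen (u : T) (p : seq T) : R :=
  if p is x :: p' then w u x + plen x p' else 0.

Definition tdist (u v : T) : R := plen u (tpath u v).

Definition perfect_matching (X Y : {set T}) (f : T -> T) : Prop :=
  {in X &, injective f} /\ f @: X = Y.

Definition mcost (X : {set T}) (f : T -> T) : R :=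
  \sum_(x in X) tdist x (f x).

Definition min_cost_pm (X Y : {set T}) (f : T -> T) : Prop :=
  perfect_matching X Y f /\
  forall g, perfect_matching X Y g -> mcost X f <= mcost X g.

Definition r_local (Y : {set T}) (r : T) (f : T -> T) : Prop :=
  forall z, z \in Ppath r (f r) -> z \in Y -> z = f r.

End Tree.

(* Main.v *)
Require Import Defs.
From Stdlib Require Import ClassicalEpsilon Classical.
From mathcomp Require Import all_boot all_order all_algebra.
From mathcomp Require Import lra.
Import Order.TTheory GRing.Theory Num.Theory.
Local Open Scope ring_scope.

Section Aux.
Variables (T : finType) (e : rel T) (R : realFieldType) (w : T -> T -> R).
Hypothesis Htree : is_tree e.
Hypothesis Hw : is_edge_length e w.

Lemma tpathP u v : upath e u (tpath e u v) v.
Proof.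
rewrite /tpath; apply: (epsilon_spec (inhabits [::]) (fun p => upath e u p v)).
by case: (proj2 (proj2 Htree) u v) => p [Hp _]; exists p.
Qed.

Lemma tpath_uniq u p v : upath e u p v -> p = tpath e u v.
Proof.
move=> H; case: (proj2 (proj2 Htree) u v) => q [_ Hq].
by rewrite -(Hq _ H) (Hq _ (tpathP u v)).
Qed.

Lemma tpath_nil u : tpath e u u = [::].
Proof. by symmetry; apply: tpath_uniq; rewrite /upath /= eqxx. Qed.

Lemma plen_ge0 u p : path e u p -> 0 <= plen w u p.
Proof.
elim: p u => [|x p IH] u //= /andP [Hux Hp].
by apply: addr_ge0; [apply: ltW; apply: (proj2 Hw) | apply: IH].
Qed.

Lemma plen_cat u p1 p2 : plen w u (p1 ++ p2) = plen w u p1 + plen w (last u p1) p2.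
Proof. by elim: p1 u => [|x p IH] u /=; rewrite ?add0r // IH addrA. Qed.

Lemma walk_ge p u : path e u p -> tdist e w u (last u p) <= plen w u p.
Proof.
elim: p u => [|x p IH] u /=.
  by move=> _; rewrite /tdist tpath_nil.
move=> /andP [Hux Hp].
have := IH _ Hp; set v := last x p => Hle.
have hw : 0 <= w u x by apply: ltW; apply: (proj2 Hw).
apply: (@le_trans _ _ (w u x + tdist e w x v)); last by rewrite lerD2l.
have := tpathP x v; rewrite /tdist; set q := tpath e x v.
case/and3P => Hq /eqP Hlast Huq.
have [uin|unin] := boolP (u \in x :: q).
  rewrite inE in uin; case/orP: uin => [/eqP ux|uq].
    by move: Hux; rewrite ux (proj1 (proj2 Htree)).
  move: Hq Hlast Huq; case/splitPr: uq => q1 q2.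
  rewrite cat_path last_cat /= => /andP [Hq1 /andP [He Hq2]] Hl Hu.
  have -> : tpath e u v = q2.
    symmetry; apply: tpath_uniq; rewrite /upath Hq2 Hl eqxx /=.
    by move: Hu => /andP [_]; rewrite cat_uniq => /and3P [_ _ H]; exact: H.
  rewrite plen_cat /=.
  have h1 := @plen_ge0 x q1 Hq1.
  have h2 : 0 <= w (last x q1) u by apply: ltW; apply: (proj2 Hw).
  lra.
have -> : tpath e u v = x :: q.
  symmetry; apply: tpath_uniq; rewrite /upath /= Hux Hq Hlast eqxx /=.
  by move: Huq => /= ->; rewrite andbT.
by rewrite /= le_refl.
Qed.

Lemma tdist_tri a b c : tdist e w a c <= tdist e w a b + tdist e w b c.
Proof.
have := tpathP a b; have := tpathP b c.
case/and3P => H2 /eqP L2 _; case/and3P => H1 /eqP L1 _.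
have := @walk_ge (tpath e a b ++ tpath e b c) a.
by rewrite cat_path H1 L1 H2 last_cat L1 L2 plen_cat L1 => /(_ isT).
Qed.

Lemma split_path r y z : z \in Ppath e r y -> z != y ->
  tdist e w r y = tdist e w r z + tdist e w z y /\
  (size (tpath e r z) < size (tpath e r y))%N.
Proof.
rewrite /Ppath inE => /orP [/eqP -> | zq] zy.
  rewrite /tdist tpath_nil /= add0r; split => //.
  have := tpathP r y; case/and3P => _ /eqP L _; move: L zy.
  by case: (tpath e r y) => //= ->; rewrite eqxx.
have := tpathP r y; rewrite /tdist; move: zq.
set q := tpath e r y; case/splitPr: q / => q1 q2.
case/and3P; rewrite cat_path last_cat /= => /andP [Hq1 /andP [He Hq2]] /eqP Hl Hu.
have E1 : tpath e r z = q1 ++ [:: z].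
  symmetry; apply: tpath_uniq.
  rewrite /upath cat_path Hq1 /= He last_cat /= eqxx /=.
  move: Hu => /andP [Hrn]; rewrite !cat_uniq => /and3P [-> hn _] /=.
  move: hn => /= /norP [hz _]; rewrite orbF hz /= andbT.
  by move: Hrn; rewrite !mem_cat !inE !negb_or ?orbF => /andP [-> /andP [-> _]].
have E2 : tpath e z y = q2.
  symmetry; apply: tpath_uniq; rewrite /upath Hq2 Hl eqxx /=.
  by move: Hu => /andP [_]; rewrite cat_uniq => /and3P [_ _ H]; exact: H.
rewrite E1 E2 !plen_cat /= addr0 addrA; split => //.
rewrite !size_cat /= ltn_add2l ltnS.
by move: Hl zy; case: q2 {Hq2 Hu E2} => //= ->; rewrite eqxx.
Qed.

Lemma pm_of (X Y : {set T}) (g : T -> T) :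
  {in X &, injective g} -> (forall t, t \in X -> g t \in Y) -> #|X| = #|Y| ->
  perfect_matching X Y g.
Proof.
move=> Hi Hm Hc; split => //; apply/eqP; rewrite eqEcard card_in_imset // Hc leqnn andbT.
by apply/subsetP => t /imsetP [x Hx ->]; apply: Hm.
Qed.

End Aux.

Theorem lemma3 (T : finType) (e : rel T) (R : realFieldType) (w : T -> T -> R)
  (X Y : {set T}) (r : T) :
  is_tree e -> is_edge_length e w ->
  #|X| = #|Y| -> r \in X ->
  exists f : T -> T, min_cost_pm e w X Y f /\ r_local e Y r f.
Proof.
move=> Ht Hw Hc Hr.
pose h t := nth r (enum Y) (index t (enum X)).
have hpm : perfect_matching X Y h.
  apply: pm_of => //.
    move=> a b Ha Hb; rewrite /h => /eqP; rewrite nth_uniq ?enum_uniq //.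
      by move/eqP => E; apply: (@index_inj _ r (enum X)); rewrite ?mem_enum.
    by rewrite -cardE -Hc cardE index_mem mem_enum.
    by rewrite -cardE -Hc cardE index_mem mem_enum.
  move=> t Ht'; rewrite /h -mem_enum mem_nth //.
  by rewrite -cardE -Hc cardE index_mem mem_enum.
pose pmb (g : {ffun T -> T}) :=
  [forall a, forall b, ((a \in X) && (b \in X) && (g a == g b)) ==> (a == b)]
  && ([set g x | x in X] == Y).
have pmbP g : pmb g -> perfect_matching X Y g.
  case/andP => /forallP Hi /eqP Hy; split => // a b Ha Hb Hab.
  by have := forallP (Hi a) b; rewrite Ha Hb Hab eqxx => /eqP.
have pmbI (g : T -> T) : perfect_matching X Y g -> pmb [ffun t => g t].
  case=> Hi Hy; apply/andP; split.
    apply/forallP => a; apply/forallP => b; apply/implyP.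
    by rewrite !ffunE => /andP [/andP [Ha Hb] /eqP Hab]; apply/eqP; apply: Hi.
  by rewrite -Hy; apply/eqP; apply: eq_imset => t; rewrite ffunE.
have mcostE (g : T -> T) : mcost e w X [ffun t => g t] = mcost e w X g.
  by apply: eq_bigr => t _; rewrite ffunE.
have [f0 Hf0] : exists f0, min_cost_pm e w X Y f0.
  have P0 := pmbI _ hpm.
  case: (arg_minP (fun g : {ffun T -> T} => mcost e w X g) P0) => m Pm Hmin.
  exists m; split; first exact: pmbP.
  by move=> g Hg; rewrite -(mcostE g); apply: Hmin; apply: pmbI.
suff H : forall n f, (size (tpath e r (f r)) < n)%N -> min_cost_pm e w X Y f ->
  exists g, min_cost_pm e w X Y g /\ r_local e Y r g by exact: (H _ f0 (ltnSn _) Hf0).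
elim=> [|n IH] f // Hn Hf.
case: (classic (r_local e Y r f)) => Hl; first by exists f.
have [z Hz] := not_all_ex_not _ _ Hl.
have [zP Hz2] := imply_to_and _ _ Hz; have [zY zne] := imply_to_and _ _ Hz2.
have zne' : z != f r by apply/eqP.
case: Hf => [[Hinj Himg] Hmin].
have /imsetP [x' Hx' Ezx] : z \in f @: X by rewrite Himg.
have xr : x' != r by apply/eqP => E; move: zne'; rewrite Ezx E eqxx.
pose s t := if t == r then x' else if t == x' then r else t.
pose g t := f (s t).
have sX t : t \in X -> s t \in X.
  by rewrite /s; case: ifP => // _; case: ifP.
have ss t : s (s t) = t.
  rewrite /s; case: (eqVneq t r) => [->|tr].
    by rewrite (negbTE xr) eqxx.
  case: (eqVneq t x') => [->|tx].
    by rewrite eqxx.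
  by rewrite ?(negbTE tr) ?(negbTE tx).
have sinj : {in X &, injective s}.
  by move=> a b _ _ E; rewrite -(ss a) -(ss b) E.
have gpm : perfect_matching X Y g.
  apply: pm_of => //.
    by move=> a b Ha Hb /(Hinj _ _ (sX _ Ha) (sX _ Hb)); apply: sinj.
  by move=> t Ht'; rewrite -Himg; apply: imset_f; apply: sX.
have [Ed Hsz] := @split_path T e R w Ht r (f r) z zP zne'.
have Hcost : mcost e w X g <= mcost e w X f.
  rewrite /mcost (bigD1 r Hr) [X in _ <= X](bigD1 r Hr) /=.
  have Hx2 : (x' \in X) && (x' != r) by rewrite Hx' xr.
  rewrite (bigD1 x' Hx2) [X in _ <= _ + X](bigD1 x' Hx2) /=.
  rewrite (eq_bigr (fun i => tdist e w i (f i))); last first.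
    by move=> i /andP [/andP [_ ir] ix]; rewrite /g /s (negbTE ir) (negbTE ix).
  rewrite /g /s eqxx (negbTE xr) eqxx -Ezx addrA [X in _ <= X]addrA lerD2r.
  have := @tdist_tri T e R w Ht Hw x' z (f r); lra.
have gmin : min_cost_pm e w X Y g.
  split=> // g' Hg'; apply: le_trans Hcost (Hmin _ Hg').
have Hgs : (size (tpath e r (g r)) < n)%N.
  have -> : g r = z by rewrite /g /s eqxx Ezx.
  by apply: leq_trans Hsz _; rewrite -ltnS.
exact: (IH g Hgs gmin).
Qed.
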